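(* Let $L\ge1$ and $K\ge L$ be integers. (i) Assume $\alpha\in(\alpha_{L+1},\alpha_L)$. There is a constant $c(K)>0$ depending only on $\alpha$ and $K$ such that: if $(l_0,\dots,l_{K+2})$ satisfies $(E_K)$ and $l_1,\dots,l_{K+2}\ge0$, then $d_0\ge c(K)$; and if moreover $l_{K+2}=0$, then $d_{K+1}\le-c(K)$. (ii) Assume $\alpha\in(\alpha_{L+1},\alpha_L]$. If $(l_0,\dots,l_{K+2})$ satisfies $(E_K)$, then $$l_{L+2}-\alpha l_{L+1}=-\frac{\sin(\frac{L+2}{2}\omega)}{\sin(\frac{L}{2}\omega)}\,l_1+2\alpha\,\frac{\cos(\frac{\omega}{2})\sin(\frac{L+3}{2}\omega)}{\sin(\frac{L}{2}\omega)}\,l_{L+1}.$$ Moreover, if $\alpha\in(\alpha_{L+1},\alpha_L)$ and $l_1,\dots,l_{K+2}\ge0$, then $l_{L+2}-\alpha l_{L+1}<-c(K)$ (for a positive constant $c(K)$ depending only on $\alpha,K$, which may be taken equal to the one in (i)).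
   Context: Define $\alpha_1:=+\infty$ and, for $L\ge2$, $\alpha_L:=\dfrac{1}{1+2\cos(\frac{2\pi}{L+2})}$. For $\alpha>1/3$, let $\omega\in(0,\pi)$ be the unique real with $\cos\omega=\frac{1-\alpha}{2\alpha}$. For an integer $K\ge0$ and a real vector $(l_0,\dots,l_{K+2})$, set $d_0:=l_0-l_1+\alpha l_2$, $d_j:=-\alpha l_{j-1}+l_j-l_{j+1}+\alpha l_{j+2}$ for $j\in\{1,\dots,K\}$, and $d_{K+1}:=-\alpha l_K+l_{K+1}-l_{K+2}$. The system $(E_K)$ is: $d_1=\dots=d_K=0$, $l_0=0$, and $\sum_{j=1}^{K+1}l_j=1$. *)

(* Defs.v *)
From Stdlib Require Import Reals Lra Lia.
Open Scope R_scope.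

(* alpha_L for L >= 2.  alpha_1 = +infinity is handled in the interval
   predicates below (the value of alpha_ 1 itself is never used). *)
Definition alpha_ (L : nat) : R := 1 / (1 + 2 * cos (2 * PI / INR (L + 2))).

Definition lt_alpha (L : nat) (a : R) : Prop := (L <= 1)%nat \/ a < alpha_ L.
Definition le_alpha (L : nat) (a : R) : Prop := (L <= 1)%nat \/ a <= alpha_ L.

Definition in_open (L : nat) (a : R) : Prop := alpha_ (L + 1) < a /\ lt_alpha L a.
Definition in_half_open (L : nat) (a : R) : Prop := alpha_ (L + 1) < a /\ le_alpha L a.

(* omega: the unique real in (0, pi) with cos omega = (1 - a)/(2 a), for a > 1/3 *)
Definition omega (a : R) : R := acos ((1 - a) / (2 * a)).

(* the d_j's for a sequence l (indices beyond K+2 are irrelevant) *)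
Definition d0 (a : R) (l : nat -> R) : R := l 0%nat - l 1%nat + a * l 2%nat.
Definition dj (a : R) (l : nat -> R) (j : nat) : R :=
  - a * l (j - 1)%nat + l j - l (j + 1)%nat + a * l (j + 2)%nat.
Definition dlast (a : R) (K : nat) (l : nat -> R) : R :=
  - a * l K + l (K + 1)%nat - l (K + 2)%nat.

Definition E_sys (a : R) (K : nat) (l : nat -> R) : Prop :=
  (forall j : nat, (1 <= j <= K)%nat -> dj a l j = 0) /\
  l 0%nat = 0 /\
  sum_f_R0 (fun j => l (S j)) K = 1.

Definition nonneg_seq (K : nat) (l : nat -> R) : Prop :=
  forall j : nat, (1 <= j <= K + 2)%nat -> 0 <= l j.

(* Main.v *)
Require Import Defs.
From Stdlib Require Import Reals Lra Lia Nsatz.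
Open Scope R_scope.


Lemma theta_facts (m : nat) : (4 <= m)%nat ->
  0 < 2 * PI / INR m <= PI / 2 /\ 0 <= cos (2 * PI / INR m).
Proof.
  intros hm. assert (Hm : 4 <= INR m) by (replace 4 with (INR 4) by (simpl; lra); apply le_INR; lia).
  pose proof PI_RGT_0.
  assert (0 < 2 * PI / INR m) by (apply Rdiv_lt_0_compat; lra).
  assert (2 * PI / INR m <= PI / 2).
  { unfold Rdiv. apply Rmult_le_reg_r with (INR m); [lra|].
    rewrite Rmult_assoc, Rinv_l by lra.
    assert (0 <= PI * (INR m - 4)) by (apply Rmult_le_pos; lra).
    replace (PI * / 2 * INR m) with (2*PI + PI*(INR m - 4)/2) by field. lra. }
  split; [lra|]. apply cos_ge_0; lra.
Qed.

Lemma cos_2PI3 : cos (2 * PI / 3) = -1/2.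
Proof.
  replace (2 * PI / 3) with (2 * (PI / 3)) by field. rewrite cos_2a_cos, cos_PI3. field.
Qed.

Lemma cos_lt_inv x y : 0 <= x <= PI -> 0 <= y <= PI -> cos x < cos y -> y < x.
Proof.
  intros hx hy hc. destruct (Rlt_le_dec y x) as [h|h]; auto.
  destruct (Req_dec x y) as [->|hne]; [lra|].
  assert (cos y < cos x) by (apply cos_decreasing_1; lra). lra.
Qed.
Lemma cos_le_inv x y : 0 <= x <= PI -> 0 <= y <= PI -> cos x <= cos y -> y <= x.
Proof.
  intros hx hy hc. destruct (Rlt_le_dec x y) as [h|h]; [|auto].
  assert (cos y < cos x) by (apply cos_decreasing_1; lra). lra.
Qed.

Lemma x_lt (a q : R) : 0 < a -> 1 - a < 2 * a * q -> (1 - a) / (2 * a) < q.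
Proof. intros. apply Rmult_lt_reg_r with (2 * a); [lra|].
  replace ((1 - a) / (2 * a) * (2 * a)) with (1 - a) by (field; lra). lra. Qed.
Lemma lt_x (a q : R) : 0 < a -> 2 * a * q < 1 - a -> q < (1 - a) / (2 * a).
Proof. intros. apply Rmult_lt_reg_r with (2 * a); [lra|].
  replace ((1 - a) / (2 * a) * (2 * a)) with (1 - a) by (field; lra). lra. Qed.
Lemma le_x (a q : R) : 0 < a -> 2 * a * q <= 1 - a -> q <= (1 - a) / (2 * a).
Proof. intros. apply Rmult_le_reg_r with (2 * a); [lra|].
  replace ((1 - a) / (2 * a) * (2 * a)) with (1 - a) by (field; lra). lra. Qed.

Lemma setup_low (L : nat) (a : R) : (1 <= L)%nat -> alpha_ (L + 1) < a ->
  0 < a /\ a * (1 + 2 * cos (omega a)) = 1 /\ 0 <= omega a <= PI /\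
  PI < omega a / 2 * (INR L + 3).
Proof.
  intros hL ha. unfold alpha_ in ha.
  destruct (theta_facts (L + 1 + 2)) as [[t1 t2] t3]; [lia|].
  set (th := 2 * PI / INR (L + 1 + 2)) in *.
  assert (HD : 1 <= 1 + 2 * cos th) by lra.
  assert (Ha : 0 < a).
  { apply Rlt_trans with (1 / (1 + 2 * cos th)); auto. apply Rdiv_lt_0_compat; lra. }
  assert (Hp : 1 < a * (1 + 2 * cos th)).
  { apply Rmult_lt_compat_r with (r := 1 + 2 * cos th) in ha; [|lra].
    unfold Rdiv in ha. rewrite Rmult_1_l, Rinv_l in ha by lra. lra. }
  assert (Hct : cos th <= 1) by apply COS_bound.
  set (x := (1 - a) / (2 * a)).
  assert (Hx1 : x < cos th).
  { apply x_lt; nra. }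
  assert (Hx2 : -1/2 < x).
  { apply lt_x; nra. }
  assert (Hcos : cos (omega a) = x) by (unfold omega; apply cos_acos; fold x; lra).
  assert (Hb : 0 <= omega a <= PI) by (unfold omega; apply acos_bound).
  split; [auto|]. split.
  { rewrite Hcos. unfold x. field. lra. }
  split; [auto|].
  assert (th < omega a).
  { apply cos_lt_inv; lra. }
  assert (HI : INR (L + 1 + 2) = INR L + 3) by (rewrite !plus_INR; simpl; ring).
  unfold th in H. rewrite HI in H.
  assert (0 < INR L + 3) by (pose proof (pos_INR L); lra).
  apply Rmult_lt_compat_r with (r := INR L + 3) in H; [|lra].
  unfold Rdiv in H. rewrite Rmult_assoc, Rinv_l in H by lra. lra.
Qed.

Lemma setup_up (L : nat) (a : R) (strict : bool) : (1 <= L)%nat -> 0 < a ->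
  (if strict then lt_alpha L a else le_alpha L a) ->
  let w := acos ((1 - a) / (2 * a)) in
  cos w = (1 - a) / (2 * a) -> 0 <= w <= PI ->
  (if strict then w / 2 * (INR L + 2) < PI else w / 2 * (INR L + 2) <= PI).
Proof.
  intros hL ha hup w hcw hw.
  assert (HL1 : (L = 1 \/ 2 <= L)%nat) by lia.
  set (x := (1 - a) / (2 * a)) in *.
  assert (Hx2 : -1/2 < x).
  { apply lt_x; nra. }
  assert (Hweak : (L = 1)%nat -> w / 2 * (INR L + 2) < PI).
  { intros ->. simpl INR.
    assert (w < 2 * PI / 3).
    { apply cos_lt_inv; try (pose proof PI_RGT_0; lra). rewrite cos_2PI3, hcw. lra. }
    lra. }
  destruct HL1 as [HL1|HL2].
  { destruct strict; [apply Hweak; auto| apply Rlt_le, Hweak; auto]. }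
  destruct (theta_facts (L + 2)) as [[t1 t2] t3]; [lia|].
  set (th := 2 * PI / INR (L + 2)) in *.
  assert (HI : INR (L + 2) = INR L + 2) by (rewrite !plus_INR; simpl; ring).
  assert (0 < INR L + 2) by (pose proof (pos_INR L); lra).
  assert (Hct : cos th <= 1) by apply COS_bound.
  destruct strict; simpl in hup; (destruct hup as [hup|hup]; [lia|]); unfold alpha_ in hup; fold th in hup.
  - assert (Hp : a * (1 + 2 * cos th) < 1).
    { apply Rmult_lt_compat_r with (r := 1 + 2 * cos th) in hup; [|lra].
      unfold Rdiv in hup. rewrite Rmult_1_l, Rinv_l in hup by lra. lra. }
    assert (Hx1 : cos th < x).
    { apply lt_x; nra. }
    assert (w < th) by (apply cos_lt_inv; try lra).
    unfold th in H0. rewrite HI in H0.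
    apply Rmult_lt_compat_r with (r := INR L + 2) in H0; [|lra].
    unfold Rdiv in H0. rewrite Rmult_assoc, Rinv_l in H0 by lra. lra.
  - assert (Hp : a * (1 + 2 * cos th) <= 1).
    { apply Rmult_le_compat_r with (r := 1 + 2 * cos th) in hup; [|lra].
      unfold Rdiv in hup. rewrite Rmult_1_l, Rinv_l in hup by lra. lra. }
    assert (Hx1 : cos th <= x).
    { apply le_x; nra. }
    assert (w <= th) by (apply cos_le_inv; try lra).
    unfold th in H0. rewrite HI in H0.
    apply Rmult_le_compat_r with (r := INR L + 2) in H0; [|lra].
    unfold Rdiv in H0. rewrite Rmult_assoc, Rinv_l in H0 by lra. lra.
Qed.


Ltac trig_nsatz X s :=
  repeat (rewrite cos_plus || rewrite sin_plus || rewrite cos_minus || rewrite sin_minus || rewrite cos_2a || rewrite sin_2a);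
  pose proof (sin2_cos2 s); pose proof (sin2_cos2 X); unfold Rsqr in *;
  set (ss := sin s) in *; set (cs := cos s) in *; set (sX := sin X) in *; set (cX := cos X) in *;
  nsatz.

Definition hrel (s al : R) := al * (1 + 2 * (cos s * cos s - sin s * sin s)) = 1.

Lemma D1 (s X al : R) (h : hrel s al) :
 sin X * (-(1 - cos(2*s)) + al*(1 - cos(2*(2*s)))) =
 al*(sin X*(1 - cos(2*X+2*s)) - sin(X+2*s)*(1-cos(2*X))).
Proof. unfold hrel in h. trig_nsatz X s. Qed.
Lemma D2 (s X al : R) (h : hrel s al) :
 sin X * (-(sin(2*s)) + al*(sin(2*(2*s)))) =
 al*(sin X*(sin(2*X+2*s)) - sin(X+2*s)*(sin(2*X))).
Proof. unfold hrel in h. trig_nsatz X s. Qed.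
Lemma Q1 (s X al : R) (h : hrel s al) :
 sin X * ((1 - cos(2*X+2*(2*s))) - al*(1 - cos(2*X+2*s))) =
 - sin(X+2*s) * (1 - cos(2*s)) + 2*al*cos s * sin(X+(s+2*s))*(1 - cos(2*X+2*s)).
Proof. unfold hrel in h. trig_nsatz X s. Qed.
Lemma Q2 (s X al : R) (h : hrel s al) :
 sin X * ((sin(2*X+2*(2*s))) - al*(sin(2*X+2*s))) =
 - sin(X+2*s) * (sin(2*s)) + 2*al*cos s * sin(X+(s+2*s))*(sin(2*X+2*s)).
Proof. unfold hrel in h. trig_nsatz X s. Qed.
Lemma Rc1 (s X al : R) (h : hrel s al) :
 -al*(1-cos(X-(s+2*s))) + (1 - cos(X-s)) - (1-cos(X+s)) + al*(1-cos(X+(s+2*s))) = 0.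
Proof. unfold hrel in h. trig_nsatz X s. Qed.
Lemma Rc2 (s X al : R) (h : hrel s al) :
 -al*(sin(X-(s+2*s))) + (sin(X-s)) - (sin(X+s)) + al*(sin(X+(s+2*s))) = 0.
Proof. unfold hrel in h. trig_nsatz X s. Qed.
Lemma Det (s : R) :
 (1 - cos(2*s)) * sin(2*(2*s)) - (1 - cos(2*(2*s)))*sin(2*s) = -4 * sin s * sin s * sin (2*s).
Proof. trig_nsatz s s. Qed.

Definition Ecf (s A C : R) (j : nat) : R := A * (1 - cos (2 * INR j * s)) + C * sin (2 * INR j * s).

Lemma Ecf_rec s A C a (h : hrel s a) (m : nat) :
  -a * Ecf s A C m + Ecf s A C (m+1) - Ecf s A C (m+2) + a * Ecf s A C (m+3) = 0.
Proof.
  unfold Ecf. set (X := (2 * INR m + 3) * s).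
  replace (2 * INR m * s) with (X - (s + 2 * s)) by (unfold X; ring).
  replace (2 * INR (m+1) * s) with (X - s) by (unfold X; rewrite plus_INR; simpl; ring).
  replace (2 * INR (m+2) * s) with (X + s) by (unfold X; rewrite plus_INR; simpl; ring).
  replace (2 * INR (m+3) * s) with (X + (s + 2 * s)) by (unfold X; rewrite plus_INR; simpl; ring).
  pose proof (Rc1 s X a h). pose proof (Rc2 s X a h). nsatz.
Qed.


Lemma closed_form s a K (l : nat -> R) (h : hrel s a) (ha : a <> 0)
  (hs : sin s <> 0) (h2 : sin (2 * s) <> 0) (l0 : l 0%nat = 0)
  (hrec : forall j, (1 <= j <= K)%nat -> dj a l j = 0) :
  exists A C, forall j, (j <= K + 2)%nat -> l j = Ecf s A C j.
Proof.
  set (u1 := 1 - cos (2 * s)). set (v1 := sin (2 * s)).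
  set (u2 := 1 - cos (2 * (2 * s))). set (v2 := sin (2 * (2 * s))).
  set (det := u1 * v2 - u2 * v1).
  assert (Hdet : det <> 0).
  { unfold det, u1, v1, u2, v2. rewrite Det.
    intro H. apply Rmult_integral in H as [H|H]; [|auto].
    apply Rmult_integral in H as [H|H]; [|auto].
    apply Rmult_integral in H as [H|H]; [lra|auto]. }
  exists ((l 1%nat * v2 - l 2%nat * v1) / det), ((u1 * l 2%nat - u2 * l 1%nat) / det).
  set (A := (l 1%nat * v2 - l 2%nat * v1) / det).
  set (C := (u1 * l 2%nat - u2 * l 1%nat) / det).
  assert (E0 : Ecf s A C 0 = 0).
  { unfold Ecf. simpl INR. replace (2 * 0 * s) with 0 by ring. rewrite cos_0, sin_0. ring. }
  assert (E1 : Ecf s A C 1 = l 1%nat).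
  { unfold Ecf. simpl INR. replace (2 * 1 * s) with (2 * s) by ring. fold u1 v1.
    unfold A, C. unfold det in *. field. auto. }
  assert (E2 : Ecf s A C 2 = l 2%nat).
  { unfold Ecf. simpl INR. replace (2 * (1 + 1) * s) with (2 * (2 * s)) by ring. fold u2 v2.
    unfold A, C. unfold det in *. field. auto. }
  assert (HE : forall n j, (j <= n)%nat -> (j <= K + 2)%nat -> l j = Ecf s A C j).
  { induction n as [|n IH].
    - intros j hj _. replace j with 0%nat by lia. rewrite l0, E0; reflexivity.
    - intros j hj hjK. destruct (Nat.le_gt_cases j n) as [hjn|hjn]; [apply IH; lia|].
      assert (j = S n) by lia. subst j.
      destruct (Nat.le_gt_cases (S n) 2) as [h3|h3].
      + destruct n as [|[|n]]; [rewrite E1; reflexivity|rewrite E2; reflexivity|lia].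
      + destruct n as [|[|n]]; [lia|lia|].
        replace (S (S (S n))) with (n + 3)%nat by lia.
        pose proof (hrec (n + 1)%nat ltac:(lia)) as Hr. unfold dj in Hr.
        replace (n + 1 - 1)%nat with n in Hr by lia.
        replace (n + 1 + 1)%nat with (n + 2)%nat in Hr by lia.
        replace (n + 1 + 2)%nat with (n + 3)%nat in Hr by lia.
        pose proof (Ecf_rec s A C a h n) as He.
        rewrite (IH n), (IH (n+1)%nat), (IH (n+2)%nat) in Hr by lia.
        apply (Rmult_eq_reg_l a); [|auto]. lra. }
  intros j hj. apply (HE j j); lia.
Qed.

Lemma identities s a K L (l : nat -> R) (h : hrel s a) (ha : a <> 0)
  (hs : sin s <> 0) (h2 : sin (2 * s) <> 0) (l0 : l 0%nat = 0)
  (hrec : forall j, (1 <= j <= K)%nat -> dj a l j = 0) (hLK : (L <= K)%nat) :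
  sin (INR (L+1) * s) * (- l 1%nat + a * l 2%nat) =
    a * (sin (INR (L+1) * s) * l (L+2)%nat - sin (INR (L+3) * s) * l (L+1)%nat) /\
  sin (INR L * s) * (l (L+2)%nat - a * l (L+1)%nat) =
    - sin (INR (L+2) * s) * l 1%nat + 2 * a * cos s * sin (INR (L+3) * s) * l (L+1)%nat.
Proof.
  destruct (closed_form s a K l h ha hs h2 l0 hrec) as [A [C HC]].
  rewrite (HC 1%nat), (HC 2%nat), (HC (L+1)%nat), (HC (L+2)%nat) by lia.
  unfold Ecf.
  replace (2 * INR 1 * s) with (2 * s) by (simpl; ring).
  replace (2 * INR 2 * s) with (2 * (2 * s)) by (simpl; ring).
  split.
  - set (X := INR (L+1) * s).
    replace (2 * INR (L+1) * s) with (2 * X) by (unfold X; ring).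
    replace (2 * INR (L+2) * s) with (2 * X + 2 * s) by (unfold X; rewrite !plus_INR; simpl; ring).
    replace (INR (L+3) * s) with (X + 2 * s) by (unfold X; rewrite !plus_INR; simpl; ring).
    pose proof (D1 s X a h). pose proof (D2 s X a h). nsatz.
  - set (X := INR L * s).
    replace (2 * INR (L+1) * s) with (2 * X + 2 * s) by (unfold X; rewrite !plus_INR; simpl; ring).
    replace (2 * INR (L+2) * s) with (2 * X + 2 * (2 * s)) by (unfold X; rewrite !plus_INR; simpl; ring).
    replace (INR (L+2) * s) with (X + 2 * s) by (unfold X; rewrite !plus_INR; simpl; ring).
    replace (INR (L+3) * s) with (X + (s + 2 * s)) by (unfold X; rewrite !plus_INR; simpl; ring).
    pose proof (Q1 s X a h). pose proof (Q2 s X a h). nsatz.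
Qed.


Lemma growth a K (l : nat -> R) (ha : 0 < a) (l0 : l 0%nat = 0)
  (hrec : forall j, (1 <= j <= K)%nat -> dj a l j = 0) :
  forall j, (j <= K + 2)%nat -> Rabs (l j) <= (1 + 2 / a) ^ j * (Rabs (l 1%nat) + Rabs (l 2%nat)).
Proof.
  set (G := 1 + 2 / a). set (N := Rabs (l 1%nat) + Rabs (l 2%nat)).
  assert (HG : 1 <= G) by (unfold G; assert (0 < 2 / a) by (apply Rdiv_lt_0_compat; lra); lra).
  assert (HN : 0 <= N) by (unfold N; pose proof (Rabs_pos (l 1%nat)); pose proof (Rabs_pos (l 2%nat)); lra).
  assert (HE : forall n j, (j <= n)%nat -> (j <= K + 2)%nat -> Rabs (l j) <= G ^ j * N).
  { induction n as [|n IH].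
    - intros j hj _. replace j with 0%nat by lia. rewrite l0, Rabs_R0. simpl. lra.
    - intros j hj hjK. destruct (Nat.le_gt_cases j n) as [hjn|hjn]; [apply IH; lia|].
      assert (j = S n) by lia. subst j.
      destruct n as [|[|n]].
      + assert (Rabs (l 1%nat) <= N) by (unfold N; pose proof (Rabs_pos (l 2%nat)); lra).
        apply Rle_trans with N; auto. rewrite <- (Rmult_1_l N) at 1.
        apply Rmult_le_compat_r; auto. simpl; lra.
      + assert (Rabs (l 2%nat) <= N) by (unfold N; pose proof (Rabs_pos (l 1%nat)); lra).
        apply Rle_trans with N; auto. rewrite <- (Rmult_1_l N) at 1.
        apply Rmult_le_compat_r; auto. simpl. nra.
      + replace (S (S (S n))) with (n + 3)%nat by lia.
        pose proof (hrec (n + 1)%nat ltac:(lia)) as Hr. unfold dj in Hr.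
        replace (n + 1 - 1)%nat with n in Hr by lia.
        replace (n + 1 + 1)%nat with (n + 2)%nat in Hr by lia.
        replace (n + 1 + 2)%nat with (n + 3)%nat in Hr by lia.
        assert (Hx : l (n + 3)%nat = l n + (l (n+2)%nat - l (n+1)%nat) / a).
        { field_simplify; [|lra]. apply (Rmult_eq_reg_l a); [|lra]. field_simplify; lra. }
        pose proof (IH n ltac:(lia) ltac:(lia)) as I0.
        pose proof (IH (n+1)%nat ltac:(lia) ltac:(lia)) as I1.
        pose proof (IH (n+2)%nat ltac:(lia) ltac:(lia)) as I2.
        assert (P0 : G ^ n <= G ^ (n+2)) by (apply Rle_pow; [auto|lia]).
        assert (P1 : G ^ (n+1) <= G ^ (n+2)) by (apply Rle_pow; [auto|lia]).
        assert (P3 : G ^ (n+3) = G ^ (n+2) * G) by (replace (n+3)%nat with (S (n+2)) by lia; simpl; ring).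
        rewrite Hx, P3.
        assert (Hd : Rabs ((l (n+2)%nat - l (n+1)%nat) / a) <= (Rabs (l (n+2)%nat) + Rabs (l (n+1)%nat)) / a).
        { unfold Rdiv. rewrite Rabs_mult, Rabs_inv, (Rabs_right a) by lra.
          apply Rmult_le_compat_r; [left; apply Rinv_0_lt_compat; lra|].
          unfold Rminus. eapply Rle_trans; [apply Rabs_triang|]. rewrite Rabs_Ropp. lra. }
        eapply Rle_trans; [apply Rabs_triang|].
        assert (HgN0 : G ^ n * N <= G ^ (n+2) * N) by (apply Rmult_le_compat_r; auto).
        assert (HgN1 : G ^ (n+1) * N <= G ^ (n+2) * N) by (apply Rmult_le_compat_r; auto).
        assert (Hq : (Rabs (l (n+2)%nat) + Rabs (l (n+1)%nat)) / a <= (2 * (G ^ (n+2) * N)) / a).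
        { unfold Rdiv. apply Rmult_le_compat_r; [left; apply Rinv_0_lt_compat; lra|]. lra. }
        assert (Heq : G ^ (n+2) * G * N = G ^ (n+2) * N + 2 * (G ^ (n+2) * N) / a) by (unfold G; field; lra).
        lra. }
  intros j hj. apply (HE j j); lia.
Qed.

Lemma sum_bound a K (l : nat -> R) (ha : 0 < a) (l0 : l 0%nat = 0)
  (hrec : forall j, (1 <= j <= K)%nat -> dj a l j = 0) :
  sum_f_R0 (fun j => l (S j)) K <= (INR K + 1) * (1 + 2 / a) ^ (K + 1) * (Rabs (l 1%nat) + Rabs (l 2%nat)).
Proof.
  set (G := 1 + 2 / a). set (N := Rabs (l 1%nat) + Rabs (l 2%nat)).
  assert (HG : 1 <= G) by (unfold G; assert (0 < 2 / a) by (apply Rdiv_lt_0_compat; lra); lra).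
  assert (HN : 0 <= N) by (unfold N; pose proof (Rabs_pos (l 1%nat)); pose proof (Rabs_pos (l 2%nat)); lra).
  assert (Ht : forall j, (j <= K)%nat -> l (S j) <= G ^ (K+1) * N).
  { intros j hj. eapply Rle_trans; [apply Rle_abs|].
    eapply Rle_trans; [apply (growth a K l ha l0 hrec); lia|].
    apply Rmult_le_compat_r; auto. apply Rle_pow; [auto|lia]. }
  assert (forall n, (n <= K)%nat -> sum_f_R0 (fun j => l (S j)) n <= (INR n + 1) * (G ^ (K+1) * N)).
  { induction n as [|n IH]; intros hn.
    - simpl. pose proof (Ht 0%nat ltac:(lia)). lra.
    - simpl sum_f_R0. rewrite S_INR. pose proof (Ht (S n) hn). pose proof (IH ltac:(lia)). lra. }
  pose proof (H K (le_n K)). rewrite Rmult_assoc. auto.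
Qed.

Lemma sum_rev (f : nat -> R) n : sum_f_R0 f n = sum_f_R0 (fun j => f (n - j)%nat) n.
Proof.
  induction n as [|n IH]; [reflexivity|].
  change (sum_f_R0 f (S n)) with (sum_f_R0 f n + f (S n)).
  rewrite (decomp_sum (fun j => f (S n - j)%nat) (S n)) by lia. simpl pred.
  replace (S n - 0)%nat with (S n) by lia.
  assert (sum_f_R0 (fun i => f (S n - S i)%nat) n = sum_f_R0 (fun j => f (n - j)%nat) n)
    by (apply sum_eq; intros; f_equal).
  rewrite H, <- IH. ring.
Qed.

Lemma reversal a K (l : nat -> R) (hE : E_sys a K l) (hN : nonneg_seq K l) (hz : l (K+2)%nat = 0) :
  let lr := fun j => l (K + 2 - j)%nat in
  E_sys a K lr /\ nonneg_seq K lr /\ d0 a lr = - dlast a K l.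
Proof.
  intros lr. destruct hE as [hrec [l0 hsum]].
  split; [split; [|split]|split].
  - intros j hj. pose proof (hrec (K + 1 - j)%nat ltac:(lia)) as Hr. unfold dj in *. unfold lr.
    replace (K + 1 - j - 1)%nat with (K + 2 - (j + 2))%nat in Hr by lia.
    replace (K + 1 - j + 1)%nat with (K + 2 - j)%nat in Hr by lia.
    replace (K + 1 - j + 2)%nat with (K + 2 - (j - 1))%nat in Hr by lia.
    replace (K + 1 - j)%nat with (K + 2 - (j + 1))%nat in Hr by lia.
    lra.
  - unfold lr. replace (K + 2 - 0)%nat with (K + 2)%nat by lia. auto.
  - unfold lr. rewrite (sum_rev (fun j => l (K + 2 - S j)%nat)).
    rewrite <- hsum. apply sum_eq. intros i hi. f_equal. lia.
  - intros j hj. unfold lr. destruct (Nat.eq_dec j (K+2)) as [->|hne].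
    + replace (K + 2 - (K + 2))%nat with 0%nat by lia. lra.
    + apply hN. lia.
  - unfold d0, dlast, lr.
    replace (K + 2 - 0)%nat with (K + 2)%nat by lia.
    replace (K + 2 - 1)%nat with (K + 1)%nat by lia.
    replace (K + 2 - 2)%nat with K by lia. lra.
Qed.


Lemma core (a S0 S1 S2 S3 cs M x y z l2 : R) : 0 < a -> 0 < S0 -> 0 < S1 -> 0 < S2 -> S3 < 0 ->
  0 < cs -> 0 < M -> 0 <= x -> 0 <= y -> 0 <= z -> 0 <= l2 ->
  S1 * (-x + a * l2) = a * (S1 * z - S3 * y) ->
  S0 * (z - a * y) = - S2 * x + 2 * a * cs * S3 * y ->
  1 <= M * (x + l2) ->
  let k := - S3 / S1 in let P := 1 + 1 / a + a + k in let B := a * S0 / S2 in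
  let ylb := 1 / (M * P * (B + 1)) in
  let m := Rmin (a * k) (- 2 * a * cs * S3 / S0) in
  0 < m * ylb / 2 /\ m * ylb / 2 <= - x + a * l2 /\ z - a * y < - (m * ylb / 2).
Proof.
  intros ha h0 h1 h2 h3 hc hM hx hy hz hl2 ID IQ hsum k P B ylb m.
  assert (hk : 0 < k) by (unfold k; unfold Rdiv; apply Rmult_lt_0_compat; [lra|apply Rinv_0_lt_compat; lra]).
  assert (hP : 0 < P) by (unfold P; assert (0 < 1 / a) by (apply Rdiv_lt_0_compat; lra); lra).
  assert (hB : 0 < B) by (unfold B; apply Rdiv_lt_0_compat; [apply Rmult_lt_0_compat|]; lra).
  assert (hden : 0 < M * P * (B + 1)) by (apply Rmult_lt_0_compat; [apply Rmult_lt_0_compat|]; lra).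
  assert (hylb : 0 < ylb) by (unfold ylb; apply Rdiv_lt_0_compat; lra).
  assert (hq : 0 < - 2 * a * cs * S3 / S0).
  { apply Rdiv_lt_0_compat; [|lra]. assert (0 < a * cs) by (apply Rmult_lt_0_compat; lra).
    replace (- 2 * a * cs * S3) with (2 * (a * cs) * (- S3)) by ring.
    apply Rmult_lt_0_compat; [|lra]. lra. }
  assert (hak : 0 < a * k) by (apply Rmult_lt_0_compat; lra).
  assert (hm : 0 < m) by (unfold m; apply Rmin_glb_lt; lra).
  assert (hm1 : m <= a * k) by apply Rmin_l.
  assert (hm2 : m <= - 2 * a * cs * S3 / S0) by apply Rmin_r.
  assert (hc0 : 0 < m * ylb / 2) by (apply Rdiv_lt_0_compat; [apply Rmult_lt_0_compat|]; lra).
  assert (pS2x : 0 <= S2 * x) by (apply Rmult_le_pos; lra).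
  assert (pT : 0 <= a * cs * (- S3) * y)
    by (apply Rmult_le_pos; [apply Rmult_le_pos; [apply Rmult_le_pos|]|]; lra).
  assert (Hz : z <= a * y).
  { apply (Rmult_le_reg_l S0); [lra|]. nra. }
  assert (Hd : - x + a * l2 = a * z + a * k * y).
  { apply (Rmult_eq_reg_l S1); [|lra]. rewrite ID. unfold k. field. lra. }
  assert (Hl2 : l2 = z + k * y + x / a).
  { apply (Rmult_eq_reg_l a); [|lra]. field_simplify; [|lra]. lra. }
  assert (Hky : 0 <= k * y) by (apply Rmult_le_pos; lra).
  assert (Hsum2 : x + l2 <= P * (x + y)).
  { rewrite Hl2. unfold P.
    assert (0 <= x / a) by (apply Rmult_le_pos; [lra|left; apply Rinv_0_lt_compat; lra]).
    assert (x / a <= (x + y) / a).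
    { unfold Rdiv. apply Rmult_le_compat_r; [left; apply Rinv_0_lt_compat; lra|lra]. }
    assert (k * y <= k * (x + y)) by (apply Rmult_le_compat_l; lra).
    assert (a * y <= a * (x + y)) by (apply Rmult_le_compat_l; lra).
    replace ((1 + 1 / a + a + k) * (x + y)) with ((x + y) + (x + y) / a + a * (x + y) + k * (x + y)) by (field; lra).
    lra. }
  assert (Hx : x <= B * y).
  { apply (Rmult_le_reg_l S2); [lra|]. unfold B.
    replace (S2 * (a * S0 / S2 * y)) with (S0 * (a * y)) by (field; lra).
    assert (0 <= S0 * z) by (apply Rmult_le_pos; lra). nra. }
  assert (Hxy : x + y <= (B + 1) * y) by lra.
  assert (H1 : 1 <= M * P * (B + 1) * y).
  { eapply Rle_trans; [apply hsum|].
    replace (M * P * (B + 1) * y) with (M * (P * ((B + 1) * y))) by ring.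
    apply Rmult_le_compat_l; [lra|]. eapply Rle_trans; [apply Hsum2|].
    apply Rmult_le_compat_l; lra. }
  assert (Hy : ylb <= y).
  { unfold ylb. apply (Rmult_le_reg_l (M * P * (B + 1))); [lra|].
    replace (M * P * (B + 1) * (1 / (M * P * (B + 1)))) with 1 by (field; lra). lra. }
  split; [auto|split].
  - rewrite Hd. assert (0 <= a * z) by (apply Rmult_le_pos; lra).
    assert (m * ylb <= a * k * y).
    { apply Rle_trans with (a * k * ylb); [apply Rmult_le_compat_r; lra|apply Rmult_le_compat_l; lra]. }
    lra.
  - assert (HQ : z - a * y = (- S2 * x) / S0 + (2 * a * cs * S3 / S0) * y).
    { apply (Rmult_eq_reg_l S0); [|lra]. rewrite IQ. field. lra. }
    assert (0 <= S2 * x / S0) by (unfold Rdiv; apply Rmult_le_pos; [lra|left; apply Rinv_0_lt_compat; lra]).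
    assert (m * ylb <= (- 2 * a * cs * S3 / S0) * y).
    { apply Rle_trans with ((- 2 * a * cs * S3 / S0) * ylb); [apply Rmult_le_compat_r; lra|apply Rmult_le_compat_l; lra]. }
    replace ((- S2 * x) / S0) with (- (S2 * x / S0)) in HQ by (field; lra).
    replace ((- 2 * a * cs * S3 / S0) * y) with (- ((2 * a * cs * S3 / S0) * y)) in * by (field; lra).
    lra.
Qed.

Lemma core_pos (a S0 S1 S2 S3 cs M : R) : 0 < a -> 0 < S0 -> 0 < S1 -> 0 < S2 -> S3 < 0 ->
  0 < cs -> 0 < M ->
  let k := - S3 / S1 in let P := 1 + 1 / a + a + k in let B := a * S0 / S2 in
  let ylb := 1 / (M * P * (B + 1)) in
  let m := Rmin (a * k) (- 2 * a * cs * S3 / S0) in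
  0 < m * ylb / 2.
Proof.
  intros ha h0 h1 h2 h3 hc hM k P B ylb m.
  assert (hk : 0 < k) by (unfold k; unfold Rdiv; apply Rmult_lt_0_compat; [lra|apply Rinv_0_lt_compat; lra]).
  assert (hP : 0 < P) by (unfold P; assert (0 < 1 / a) by (apply Rdiv_lt_0_compat; lra); lra).
  assert (hB : 0 < B) by (unfold B; apply Rdiv_lt_0_compat; [apply Rmult_lt_0_compat|]; lra).
  assert (hden : 0 < M * P * (B + 1)) by (apply Rmult_lt_0_compat; [apply Rmult_lt_0_compat|]; lra).
  assert (hylb : 0 < ylb) by (unfold ylb; apply Rdiv_lt_0_compat; lra).
  assert (hq : 0 < - 2 * a * cs * S3 / S0).
  { apply Rdiv_lt_0_compat; [|lra]. assert (0 < a * cs) by (apply Rmult_lt_0_compat; lra).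
    replace (- 2 * a * cs * S3) with (2 * (a * cs) * (- S3)) by ring.
    apply Rmult_lt_0_compat; [|lra]. lra. }
  assert (hak : 0 < a * k) by (apply Rmult_lt_0_compat; lra).
  assert (hm : 0 < m) by (unfold m; apply Rmin_glb_lt; lra).
  apply Rdiv_lt_0_compat; [apply Rmult_lt_0_compat|]; lra.
Qed.


Lemma s_setup (L : nat) (a : R) (strict : bool) (hL : (1 <= L)%nat) (hlow : alpha_ (L + 1) < a)
  (hup : if strict then lt_alpha L a else le_alpha L a) :
  let s := omega a / 2 in
  0 < a /\ hrel s a /\ 0 < s /\ PI < s * (INR L + 3) /\
  (if strict then s * (INR L + 2) < PI else s * (INR L + 2) <= PI).
Proof.
  intros s.
  destruct (setup_low L a hL hlow) as [ha [hcw [hw hPI3]]].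
  assert (hcx : cos (omega a) = (1 - a) / (2 * a)).
  { replace (cos (omega a)) with ((a * (1 + 2 * cos (omega a)) - a) / (2 * a)) by (field; lra).
    rewrite hcw. reflexivity. }
  pose proof (setup_up L a strict hL ha hup) as hup2. cbv zeta in hup2.
  specialize (hup2 hcx hw).
  assert (hn : 1 <= INR L) by (replace 1 with (INR 1) by reflexivity; apply le_INR; auto).
  split; [auto|]. split.
  { unfold hrel. replace (cos s * cos s - sin s * sin s) with (cos (2 * s)) by (rewrite cos_2a; ring).
    replace (2 * s) with (omega a) by (unfold s; field). exact hcw. }
  assert (hPI : PI < s * (INR L + 3)) by (unfold s; exact hPI3).
  split; [|split; [auto|]].
  - destruct (Rle_lt_dec s 0) as [h|h]; [|auto].
    assert (s * (INR L + 3) <= 0) by nra. pose proof PI_RGT_0. lra.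
  - unfold s. destruct strict; exact hup2.
Qed.

Lemma sgn_facts (L : nat) (s : R) (hL : (1 <= L)%nat) (hs : 0 < s) (h3 : PI < s * (INR L + 3))
  (h2 : s * (INR L + 2) <= PI) :
  0 < sin (INR L * s) /\ 0 < sin (INR (L+1) * s) /\ sin (INR (L+3) * s) < 0 /\ 0 < cos s /\
  sin s <> 0 /\ sin (2 * s) <> 0.
Proof.
  assert (hn : 1 <= INR L) by (replace 1 with (INR 1) by reflexivity; apply le_INR; auto).
  pose proof PI_RGT_0.
  assert (HI1 : INR (L+1) = INR L + 1) by (rewrite plus_INR; reflexivity).
  assert (HI3 : INR (L+3) = INR L + 3) by (rewrite plus_INR; simpl; ring).
  rewrite HI1, HI3.
  assert (0 < INR L * s) by (apply Rmult_lt_0_compat; lra).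
  assert (s * 3 <= s * (INR L + 2)) by (apply Rmult_le_compat_l; lra).
  split; [apply sin_gt_0; nra|].
  split; [apply sin_gt_0; nra|].
  split; [apply sin_lt_0; nra|].
  split; [apply cos_gt_0; nra|].
  split; apply Rgt_not_eq, sin_gt_0; lra.
Qed.

Theorem mainTheorem11 (L K : nat) (a : R) (hL : (1 <= L)%nat) (hK : (L <= K)%nat) :
  (in_open L a ->
   exists c : R, 0 < c /\
     forall l : nat -> R, E_sys a K l -> nonneg_seq K l ->
       c <= d0 a l /\
       (l (K + 2)%nat = 0 -> dlast a K l <= - c) /\
       l (L + 2)%nat - a * l (L + 1)%nat < - c) /\
  (in_half_open L a ->
   forall l : nat -> R, E_sys a K l ->
     l (L + 2)%nat - a * l (L + 1)%nat =
       - (sin (INR (L + 2) / 2 * omega a) / sin (INR L / 2 * omega a)) * l 1%nat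
       + 2 * a * (cos (omega a / 2) * sin (INR (L + 3) / 2 * omega a)
                  / sin (INR L / 2 * omega a)) * l (L + 1)%nat).
Proof.
  split.
  - intros [hlow hup].
    destruct (s_setup L a true hL hlow hup) as [ha [h [hs [h3 h2]]]].
    set (s := omega a / 2) in *.
    destruct (sgn_facts L s hL hs h3 (Rlt_le _ _ h2)) as [S0p [S1p [S3n [csp [hs0 hs2]]]]].
    assert (S2p : 0 < sin (INR (L+2) * s)).
    { rewrite plus_INR. simpl INR. apply sin_gt_0; [|lra].
      pose proof (pos_INR L). apply Rmult_lt_0_compat; lra. }
    set (M := (INR K + 1) * (1 + 2 / a) ^ (K + 1)).
    assert (hM : 0 < M).
    { unfold M. apply Rmult_lt_0_compat; [pose proof (pos_INR K); lra|].
      apply pow_lt. assert (0 < 2 / a) by (apply Rdiv_lt_0_compat; lra). lra. }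
    pose proof (core_pos a (sin (INR L * s)) (sin (INR (L+1) * s)) (sin (INR (L+2) * s))
                  (sin (INR (L+3) * s)) (cos s) M ha S0p S1p S2p S3n csp hM) as Hpos.
    cbv zeta in Hpos.
    set (c := Rmin (a * (- sin (INR (L+3) * s) / sin (INR (L+1) * s)))
            (- 2 * a * cos s * sin (INR (L+3) * s) / sin (INR L * s)) *
          (1 / (M * (1 + 1 / a + a + - sin (INR (L+3) * s) / sin (INR (L+1) * s)) *
                 (a * sin (INR L * s) / sin (INR (L+2) * s) + 1))) / 2) in *.
    assert (Hmain : forall l, E_sys a K l -> nonneg_seq K l ->
               c <= d0 a l /\ l (L + 2)%nat - a * l (L + 1)%nat < - c).
    { intros l hE hN. destruct hE as [hrec [l0 hsum]].
      destruct (identities s a K L l h ltac:(lra) hs0 hs2 l0 hrec hK) as [ID IQ].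
      pose proof (sum_bound a K l ha l0 hrec) as SB.
      assert (n1 : 0 <= l 1%nat) by (apply hN; lia).
      assert (n2 : 0 <= l 2%nat) by (apply hN; lia).
      assert (nL1 : 0 <= l (L+1)%nat) by (apply hN; lia).
      assert (nL2 : 0 <= l (L+2)%nat) by (apply hN; lia).
      rewrite (Rabs_right (l 1%nat)), (Rabs_right (l 2%nat)) in SB by lra.
      assert (hsum' : 1 <= M * (l 1%nat + l 2%nat)) by (unfold M; lra).
      pose proof (core a _ _ _ _ _ M (l 1%nat) (l (L+1)%nat) (l (L+2)%nat) (l 2%nat)
                    ha S0p S1p S2p S3n csp hM n1 nL1 nL2 n2 ID IQ hsum') as Hc.
      cbv zeta in Hc. fold c in Hc. destruct Hc as [_ [Hc1 Hc2]].
      split; [|exact Hc2]. unfold d0. rewrite l0. lra. }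
    exists c. split; [exact Hpos|].
    intros l hE hN. destruct (Hmain l hE hN) as [Hd HQ].
    split; [exact Hd|split; [|exact HQ]].
    intros hz. destruct (reversal a K l hE hN hz) as [hE' [hN' Hd']].
    destruct (Hmain _ hE' hN') as [Hd2 _]. lra.
  - intros [hlow hup] l hE.
    destruct (s_setup L a false hL hlow hup) as [ha [h [hs [h3 h2]]]].
    set (s := omega a / 2) in *.
    destruct (sgn_facts L s hL hs h3 h2) as [S0p [S1p [S3n [csp [hs0 hs2]]]]].
    destruct hE as [hrec [l0 hsum]].
    destruct (identities s a K L l h ltac:(lra) hs0 hs2 l0 hrec hK) as [ID IQ].
    replace (INR (L + 2) / 2 * omega a) with (INR (L+2) * s) by (unfold s; field).
    replace (INR (L + 3) / 2 * omega a) with (INR (L+3) * s) by (unfold s; field).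
    replace (INR L / 2 * omega a) with (INR L * s) by (unfold s; field).
    apply (Rmult_eq_reg_l (sin (INR L * s))); [|lra].
    rewrite IQ. field. lra.
Qed.
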